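(* Let $d$ be a positive integer, let $F$ be a nonempty Young diagram whose outer boundary is encoded by the type sequence $w$, and let $T$ be a $d$-semistandard $w$-oscillating tableau. Let $\Phi_F(T)$ denote the filling of the unique $d$-RSK growth diagram on $F$ whose partitions along the outer boundary (listed from the point on the positive $x$-axis) are $T$. Then: (1) For each $i$, the sum of the entries in the $i$-th row of $\Phi_F(T)$ equals $\mathrm{wt}^+(T)_i$, and for each $j$, the sum of the entries in the $j$-th column equals $\mathrm{wt}^-(T)_j$. (2) Let $T^{\mathrm{rev}}$ be the reversed sequence, regarded as a $d$-semistandard $w'$-oscillating tableau, where $w'$ is obtained from $w$ by reversing it and interchanging `$+$' and `$-$'; let $F'$ be the reflection of $F$ across $y=x$ (whose outer boundary is encoded by $w'$). Then $\Phi_{F'}(T^{\mathrm{rev}})$ is the reflection of $\Phi_F(T)$ across the line $y=x$. The same properties hold with RSK growth diagrams in place of $d$-RSK growth diagrams and semistandard $w$-oscillating tableaux in place of $d$-semistandard ones.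
   Context: Partitions: finite weakly decreasing sequences of positive integers, $\lambda_i=0$ for $i>\ell(\lambda)$, $|\lambda|=\sum\lambda_i$; $d$-partitions have $\ell\le d$; $\alpha\prec\beta$ (also $\beta\succ\alpha$) means $\beta_1\ge\alpha_1\ge\beta_2\ge\alpha_2\ge\cdots$. Young diagrams lie in the first quadrant with unit cells at integer lattice points, left-justified; row $i$ is the $i$-th row of cells counted upward from the $x$-axis, column $j$ the $j$-th column counted from the $y$-axis. A filling assigns nonnegative integers to cells. The outer boundary is the lattice path of unit up/left steps from the positive $x$-axis to the positive $y$-axis; its type sequence records `$+$' for up steps and `$-$' for left steps. A semistandard $w$-oscillating tableau ($w=w_1\cdots w_r$) is a sequence of partitions $\emptyset=\lambda^{(0)},\ldots,\lambda^{(r)}=\emptyset$ with $\lambda^{(i-1)}\prec\lambda^{(i)}$ if $w_i=+$ and $\lambda^{(i-1)}\succ\lambda^{(i)}$ if $w_i=-$; $d$-semistandard if all are $d$-partitions. Weights: $\mathrm{wt}^+(T)_i=|\lambda^{(a_i)}|-|\lambda^{(a_i-1)}|$ where $a_i$ is the index of the $i$-th `$+$' in $w$; $\mathrm{wt}^-(T)_i=|\lambda^{(b_i-1)}|-|\lambda^{(b_i)}|$ where $b_i$ is the index of the $i$-th-to-last `$-$' in $w$. A growth diagram on $F$: a filling plus a partition at each lattice point, with $\emptyset$ on the coordinate axes, each cell (entry $m$; bottom-left, top-left, bottom-right, top-right corners $\kappa,\mu,\nu,\rho$) satisfying a local rule. RSK rule: $\mu\succ\kappa\prec\nu$, $\mu\prec\rho\succ\nu$,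 $\rho_1=m+\max(\mu_1,\nu_1)$, $\rho_i+\kappa_{i-1}=\min(\mu_{i-1},\nu_{i-1})+\max(\mu_i,\nu_i)$ for $i\ge2$. $d$-RSK rule: all four are $d$-partitions, $\mu\succ\kappa\prec\nu$, $\mu\prec\rho\succ\nu$, $m=0$ or $\kappa_d=0$, $\rho_1+\kappa_d=m+\min(\mu_d,\nu_d)+\max(\mu_1,\nu_1)$, $\rho_i+\kappa_{i-1}=\min(\mu_{i-1},\nu_{i-1})+\max(\mu_i,\nu_i)$ for $2\le i\le d$. It is known (and proved in the paper) that each $d$-semistandard (resp. semistandard) $w$-oscillating tableau placed on the outer boundary extends uniquely to a $d$-RSK (resp. RSK) growth diagram on $F$, so $\Phi_F$ is well defined. *)

(* Defs.v *)
From mathcomp Require Import all_boot.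
Set Implicit Arguments. Unset Strict Implicit. Unset Printing Implicit Defensive.

(* ---------- Partitions ----------
   A partition is a seq nat [:: l_1; l_2; ...; l_l] (0-indexed: nth 0 l (i-1) = l_i),
   weakly decreasing with positive entries; l_i = 0 for i > size l is automatic
   since nth 0 returns 0 out of range. *)
Definition is_partition (l : seq nat) : bool :=
  sorted geq l && all (fun a => 0 < a) l.

Definition is_dpartition (d : nat) (l : seq nat) : bool :=
  is_partition l && (size l <= d).

Definition psize (l : seq nat) : nat := sumn l.

Definition prec (a b : seq nat) : Prop :=
  forall i, nth 0 b i.+1 <= nth 0 a i <= nth 0 b i.

(* ---------- Young diagrams ----------
   A Young diagram F is given by its shape lam (a partition): row i (counted
   upward from the x-axis, 1-indexed) has nth 0 lam (i-1) cells.  The cell in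
   row i, column j (1-indexed) is the unit square [j-1,j] x [i-1,i]. *)
Definition cell_F (lam : seq nat) (i j : nat) : bool :=
  (0 < i <= size lam) && (0 < j <= nth 0 lam i.-1).

(* lattice point (x,y) lies in F (closed region) *)
Definition in_F (lam : seq nat) (x y : nat) : bool :=
  (y <= size lam) && (x <= nth 0 lam y.-1).

(* conjugate partition = shape of the reflection of F across y = x *)
Definition conj_part (lam : seq nat) : seq nat :=
  mkseq (fun j => count (fun a => j < a) lam) (head 0 lam).

(* ---------- Outer boundary ----------
   Lattice path of unit up/left steps from (lam_1, 0) to (0, size lam). *)
Definition bstep (lam : seq nat) (p : nat * nat) : nat * nat :=
  let: (x, y) := p in
  if (y < size lam) && (x <= nth 0 lam y) then (x, y.+1) else (x.-1, y).

Definition bpt (lam : seq nat) (k : nat) : nat * nat :=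
  iter k (bstep lam) (head 0 lam, 0).

Definition blen (lam : seq nat) : nat := head 0 lam + size lam.

(* type sequence of the outer boundary: true = '+' (up step), false = '-' (left) *)
Definition bword (lam : seq nat) : seq bool :=
  [seq (bpt lam k).2 < (bpt lam k.+1).2 | k <- iota 0 (blen lam)].

(* ---------- Oscillating tableaux ----------
   T = [:: lambda^(0); ...; lambda^(r)], r = size w; w_i is nth false w (i-1).
   [ispart] = is_partition (semistandard) or is_dpartition d (d-semistandard). *)
Definition osc_tableau (ispart : seq nat -> bool) (w : seq bool) (T : seq (seq nat))
  : Prop :=
  [/\ size T = (size w).+1,
      nth [::] T 0 = [::],
      nth [::] T (size w) = [::],
      (forall k, k <= size w -> ispart (nth [::] T k)) &
      (forall k, k < size w ->
         if nth false w k then prec (nth [::] T k) (nth [::] T k.+1)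
         else prec (nth [::] T k.+1) (nth [::] T k))].

Definition pos_plus (w : seq bool) : seq nat :=
  [seq k <- iota 0 (size w) | nth false w k].
Definition pos_minus (w : seq bool) : seq nat :=
  [seq k <- iota 0 (size w) | ~~ nth false w k].

(* wt^+(T)_i, i >= 1: a_i = (nth 0 (pos_plus w) (i-1)).+1;
   value |lambda^(a_i)| - |lambda^(a_i - 1)| (nonnegative since lambda^(a_i-1) ≺ lambda^(a_i)) *)
Definition wt_plus (w : seq bool) (T : seq (seq nat)) (i : nat) : nat :=
  let k := nth 0 (pos_plus w) i.-1 in
  psize (nth [::] T k.+1) - psize (nth [::] T k).

(* wt^-(T)_i, i >= 1: b_i = index of the i-th-to-last '-';
   value |lambda^(b_i - 1)| - |lambda^(b_i)| *)
Definition wt_minus (w : seq bool) (T : seq (seq nat)) (i : nat) : nat :=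
  let k := nth 0 (rev (pos_minus w)) i.-1 in
  psize (nth [::] T k) - psize (nth [::] T k.+1).

(* ---------- Local rules ----------
   kappa = bottom-left, mu = top-left, nu = bottom-right, rho = top-right, m = entry.
   Parts are 0-indexed: rho_i (paper) = nth 0 rho (i-1). *)
Definition RSK_rule (kappa mu nu rho : seq nat) (m : nat) : Prop :=
  [/\ prec kappa mu /\ prec kappa nu, prec mu rho /\ prec nu rho,
      nth 0 rho 0 = m + maxn (nth 0 mu 0) (nth 0 nu 0) &
      (forall i, nth 0 rho i.+1 + nth 0 kappa i =
                 minn (nth 0 mu i) (nth 0 nu i) + maxn (nth 0 mu i.+1) (nth 0 nu i.+1))].

Definition dRSK_rule (d : nat) (kappa mu nu rho : seq nat) (m : nat) : Prop :=
  [/\ [&& is_dpartition d kappa, is_dpartition d mu,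
          is_dpartition d nu & is_dpartition d rho],
      [/\ prec kappa mu, prec kappa nu, prec mu rho & prec nu rho],
      (m = 0 \/ nth 0 kappa d.-1 = 0),
      nth 0 rho 0 + nth 0 kappa d.-1 =
        m + minn (nth 0 mu d.-1) (nth 0 nu d.-1) + maxn (nth 0 mu 0) (nth 0 nu 0) &
      (forall i, 0 < i < d ->
         nth 0 rho i + nth 0 kappa i.-1 =
         minn (nth 0 mu i.-1) (nth 0 nu i.-1) + maxn (nth 0 mu i) (nth 0 nu i))].

(* ---------- Growth diagrams ----------
   P x y = partition at lattice point (x,y); f i j = entry of the cell in row i,
   column j. *)
Definition growth_diagram (rule : seq nat -> seq nat -> seq nat -> seq nat -> nat -> Prop)
  (ispart : seq nat -> bool) (lam : seq nat)
  (P : nat -> nat -> seq nat) (f : nat -> nat -> nat) : Prop :=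
  [/\ (forall x y, in_F lam x y -> ispart (P x y)),
      (forall x y, in_F lam x y -> (x == 0) || (y == 0) -> P x y = [::]) &
      (forall i j, cell_F lam i j ->
         rule (P j.-1 i.-1) (P j.-1 i) (P j i.-1) (P j i) (f i j))].

Definition boundary_is (lam : seq nat) (P : nat -> nat -> seq nat) (T : seq (seq nat))
  : Prop :=
  forall k, k <= blen lam -> P (bpt lam k).1 (bpt lam k).2 = nth [::] T k.

Definition row_col_sums (lam : seq nat) (w : seq bool) (T : seq (seq nat))
  (f : nat -> nat -> nat) : Prop :=
  (forall i, 0 < i <= size lam ->
     \sum_(1 <= j < (nth 0 lam i.-1).+1) f i j = wt_plus w T i) /\
  (forall j, 0 < j <= head 0 lam ->
     \sum_(1 <= i < (size lam).+1 | j <= nth 0 lam i.-1) f i j = wt_minus w T j).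

Definition prop34_for (rule : seq nat -> seq nat -> seq nat -> seq nat -> nat -> Prop)
  (ispart : seq nat -> bool) : Prop :=
  forall (lam : seq nat) (w : seq bool) (T : seq (seq nat)),
    is_partition lam -> 0 < size lam -> w = bword lam ->
    osc_tableau ispart w T ->
    forall (P : nat -> nat -> seq nat) (f : nat -> nat -> nat),
      growth_diagram rule ispart lam P f -> boundary_is lam P T ->
      row_col_sums lam w T f /\
      (forall (P' : nat -> nat -> seq nat) (f' : nat -> nat -> nat),
         growth_diagram rule ispart (conj_part lam) P' f' ->
         boundary_is (conj_part lam) P' (rev T) ->
         forall i j, cell_F (conj_part lam) i j -> f' i j = f j i).

(* Main.v *)
Require Import Defs.
From mathcomp Require Import all_boot zify.
Set Implicit Arguments. Unset Strict Implicit. Unset Printing Implicit Defensive.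

Lemma geq_trans : transitive geq.
Proof. move=> a b c /= h1 h2; exact: leq_trans h2 h1. Qed.

Lemma nth_mono (l : seq nat) i j : sorted geq l -> i <= j -> nth 0 l j <= nth 0 l i.
Proof.
move=> Hs Hij; case: (ltnP j (size l)) => Hj; last by rewrite nth_default.
have Hi : i < size l by apply: leq_ltn_trans Hj.
exact: (sorted_leq_nth geq_trans (fun x => leqnn x) 0 Hs).
Qed.

Lemma part_pos (l : seq nat) i : is_partition l -> (0 < nth 0 l i) = (i < size l).
Proof.
case/andP=> _ Ha; case: (ltnP i (size l)) => Hi; last by rewrite nth_default.
by move/allP: Ha; apply; rewrite mem_nth.
Qed.

Lemma part_eq (a b : seq nat) : is_partition a -> is_partition b ->
  (forall i, nth 0 a i = nth 0 b i) -> a = b.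
Proof.
move=> Ha Hb H.
have Hs : size a = size b.
  apply/eqP; rewrite eqn_leq; apply/andP; split.
  - rewrite leqNgt; apply/negP => Hlt.
    by move: (part_pos (size b) Ha); rewrite Hlt H (part_pos _ Hb) ltnn.
  - rewrite leqNgt; apply/negP => Hlt.
    by move: (part_pos (size a) Hb); rewrite Hlt -H (part_pos _ Ha) ltnn.
by apply: (eq_from_nth (x0:=0)) Hs _ => i _.
Qed.

Lemma head_nth (l : seq nat) : head 0 l = nth 0 l 0.
Proof. by case: l. Qed.

Lemma inF_down lam x y x' y' : is_partition lam -> in_F lam x y -> x' <= x -> y' <= y ->
  in_F lam x' y'.
Proof.
case/andP=> Hs _; rewrite /in_F => /andP[Hy Hx] Hxx Hyy.
apply/andP; split; first exact: leq_trans Hyy Hy.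
apply: leq_trans Hxx (leq_trans Hx _); apply: nth_mono => //; lia.
Qed.

Lemma inF_head lam x y : is_partition lam -> in_F lam x y -> x <= head 0 lam.
Proof.
case/andP=> Hs _ /andP[_ Hx]; rewrite head_nth; apply: leq_trans Hx _.
exact: nth_mono.
Qed.

Lemma inF_size lam x y : in_F lam x y -> y <= size lam.
Proof. by case/andP. Qed.
Lemma bptS lam k : bpt lam k.+1 = bstep lam (bpt lam k).
Proof. by []. Qed.

Lemma bpt_S_y lam k : (bpt lam k.+1).2 = (bpt lam k).2 + ((bpt lam k).2 < (bpt lam k.+1).2).
Proof.
rewrite bptS; case: (bpt lam k) => x y /=; rewrite /bstep.
by case: ifP => _ /=; rewrite ?ltnSn ?ltnn ?addn1 ?addn0.
Qed.

Lemma bpt_inv lam k : is_partition lam -> 0 < size lam -> k <= blen lam ->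
  [/\ in_F lam (bpt lam k).1 (bpt lam k).2,
      ~~ in_F lam (bpt lam k).1.+1 (bpt lam k).2.+1 &
      head 0 lam + (bpt lam k).2 = k + (bpt lam k).1].
Proof.
move=> Hp Hsz; elim: k => [|k IH] Hk.
  rewrite /bpt /= /in_F /= head_nth leqnn /=; split => //.
  by rewrite ltnn andbF. by rewrite addn0.
have [Hin Hnb Hlv] := IH (ltnW Hk).
rewrite bptS; move: Hin Hnb Hlv; case: (bpt lam k) => x y /= Hin Hnb Hlv.
rewrite /bstep; case: ifP => /= Hc.
- case/andP: Hc => Hy Hx.
  split; last by lia.
  + by rewrite /in_F /= Hy Hx.
  + apply/negP => /andP[Hy2 Hx2].
    move: Hnb; rewrite /in_F /= Hy /= => Hnb.
    case/andP: Hp => Hs _.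
    have H := nth_mono Hs (leqnSn y). simpl in Hx2. lia.
- have Hx0 : 0 < x.
    case: x Hin Hnb Hlv Hc => // Hin Hnb Hlv Hc.
    move: Hc; rewrite leq0n andbT => /negbT; rewrite -leqNgt => Hy.
    have := inF_size Hin => Hy2. rewrite /blen in Hk. lia.
  split.
  + apply: inF_down Hin _ _ => //; lia.
  + by rewrite /in_F /= prednK // Hc.
  + lia.
Qed.

Lemma level_uniq lam x y x' y' : is_partition lam ->
  in_F lam x y -> ~~ in_F lam x.+1 y.+1 ->
  in_F lam x' y' -> ~~ in_F lam x'.+1 y'.+1 -> x + y' = x' + y -> x = x' /\ y = y'.
Proof.
move=> Hp H1 N1 H2 N2 E.
case: (ltngtP x x') => Hx.
- have Hy : y < y' by lia.
  by move: N1; rewrite (inF_down Hp H2 Hx Hy).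
- have Hy : y' < y by lia.
  by move: N2; rewrite (inF_down Hp H1 Hx Hy).
- split => //; lia.
Qed.

Lemma bpt_char lam x y : is_partition lam -> 0 < size lam ->
  in_F lam x y -> ~~ in_F lam x.+1 y.+1 ->
  bpt lam (head 0 lam - x + y) = (x, y).
Proof.
move=> Hp Hsz Hin Hnb.
have Hxh := inF_head Hp Hin. have Hys := inF_size Hin.
have Hk : head 0 lam - x + y <= blen lam by rewrite /blen; lia.
have [Hin' Hnb' Hlv] := bpt_inv Hp Hsz Hk.
have [E1 E2] := level_uniq Hp Hin' Hnb' Hin Hnb ltac:(lia).
by case: (bpt lam _) E1 E2 => a b /= -> ->.
Qed.

Lemma boundary_val lam P T x y : is_partition lam -> 0 < size lam -> boundary_is lam P T ->
  in_F lam x y -> ~~ in_F lam x.+1 y.+1 -> P x y = nth [::] T (head 0 lam - x + y).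
Proof.
move=> Hp Hsz HB Hin Hnb.
have Hxh := inF_head Hp Hin. have Hys := inF_size Hin.
have Hk : head 0 lam - x + y <= blen lam by rewrite /blen; lia.
by rewrite -HB // bpt_char.
Qed.

Lemma count_nth (lam : seq nat) y x : sorted geq lam -> 0 < y ->
  (x < count (fun a => y <= a) lam) = (y <= nth 0 lam x).
Proof.
elim: lam x => [|a l IH] x Hs Hy; first by rewrite nth_nil; case: y Hy.
have Hsl : sorted geq l by exact: path_sorted Hs.
case: (leqP y a) => Hya /=.
- rewrite Hya add1n; case: x => [|x] //=; by rewrite ltnS IH.
- have Hall := order_path_min geq_trans Hs.
  have -> : count (fun a => y <= a) l = 0.
    apply/eqP; rewrite -leqn0 leqNgt -has_count; apply/hasP => -[b Hb Hyb].
    move/allP: Hall => /(_ b Hb) /= Hba. lia.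
  have H := nth_mono Hs (leq0n x). simpl in H.
  have -> : (y <= a) = false by apply/negbTE; rewrite -ltnNge.
  rewrite addn0 ltn0; apply/esym/negbTE; rewrite -ltnNge. lia.
Qed.

Lemma conj_nth lam j : nth 0 (conj_part lam) j =
  if j < head 0 lam then count (fun a => j < a) lam else 0.
Proof.
rewrite /conj_part; case: ifP => H; first by rewrite nth_mkseq.
by rewrite nth_default // size_mkseq leqNgt H.
Qed.

Lemma conj_size lam : size (conj_part lam) = head 0 lam.
Proof. by rewrite size_mkseq. Qed.

Lemma conj_head lam : is_partition lam -> 0 < size lam -> head 0 (conj_part lam) = size lam.
Proof.
move=> Hp Hsz; rewrite head_nth conj_nth.
have -> : 0 < head 0 lam by rewrite head_nth part_pos.
case/andP: Hp => _ Ha. by move: Ha; rewrite all_count => /eqP.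
Qed.

Lemma conj_part_ok lam : is_partition lam -> 0 < size lam -> is_partition (conj_part lam).
Proof.
move=> Hp Hsz; apply/andP; split.
- rewrite /conj_part /mkseq.
  case: (head 0 lam) => [|n] //=.
  elim: n 0 => [|n IH] m //=.
  rewrite IH andbT. apply: sub_count => a /=. lia.
- apply/(all_nthP 0) => j; rewrite conj_size => Hj.
  rewrite conj_nth Hj.
  case: lam Hp Hsz Hj => [|a l] //= _ _ Hj. by rewrite Hj.
Qed.

Lemma inF_conj lam x y : is_partition lam -> 0 < size lam ->
  in_F (conj_part lam) x y = in_F lam y x.
Proof.
move=> Hp Hsz; have Hs : sorted geq lam by case/andP: Hp.
rewrite /in_F conj_size conj_nth.
have Hh : 0 < head 0 lam by rewrite head_nth part_pos.
case: y => [|y] /=.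
- rewrite Hh leq0n /= andbT.
  by case/andP: Hp => _ Ha; move: Ha; rewrite all_count => /eqP ->.
- case: (ltnP y (head 0 lam)) => Hyh /=.
  + 
    case: x => [|x] /=.
    * by rewrite leq0n -head_nth.
    * rewrite count_nth //.
      case Hn: (y < nth 0 lam x); rewrite ?andbT ?andbF //.
      by rewrite -(part_pos x Hp); symmetry; apply: leq_ltn_trans (leq0n y) Hn.
  + symmetry; apply/negP => /andP[_ H].
    have H2 := nth_mono Hs (leq0n x.-1). rewrite head_nth in Hyh. lia.
Qed.

Lemma cellF_inF lam i j : cell_F lam i j = [&& 0 < i, 0 < j & in_F lam j i].
Proof.
rewrite /cell_F /in_F; case: i => [|i] //=; case: j => [|j] //=.
by rewrite andbC.
Qed.

Lemma cellF_conj lam i j : is_partition lam -> 0 < size lam ->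
  cell_F (conj_part lam) i j = cell_F lam j i.
Proof.
move=> Hp Hsz; rewrite !cellF_inF inF_conj //.
by case: i; case: j.
Qed.

Definition S (l : seq nat) n := \sum_(0 <= i < n) nth 0 l i.

Lemma S_sumn l n : size l <= n -> S l n = sumn l.
Proof.
rewrite /S; elim: l n => [|a l IH] n Hn /=.
  by rewrite big1 // => i _; rewrite nth_nil.
case: n Hn => [|n] // Hn.
by rewrite big_nat_recl //= IH.
Qed.

Lemma S_minmax mu nu n : S (map (fun i => minn (nth 0 mu i) (nth 0 nu i)) (iota 0 n)) n +
   S (map (fun i => maxn (nth 0 mu i) (nth 0 nu i)) (iota 0 n)) n = S mu n + S nu n.
Proof.
rewrite /S -!big_split /=; apply: eq_big_nat => i /andP[_ Hi].
by rewrite !(nth_map 0) ?size_iota // nth_iota // add0n addn_min_max.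
Qed.

Lemma S_recr l n : S l n.+1 = S l n + nth 0 l n.
Proof. by rewrite /S big_nat_recr. Qed.

Lemma RSK_sum k mu nu rho m : RSK_rule k mu nu rho m ->
  psize rho + psize k = m + psize mu + psize nu.
Proof.
case=> _ _ H0 Hi.
set N := size rho + size k + size mu + size nu.
set mi := map (fun i => minn (nth 0 mu i) (nth 0 nu i)) (iota 0 N.+1).
set ma := map (fun i => maxn (nth 0 mu i) (nth 0 nu i)) (iota 0 N.+1).
have Emi : forall i, i < N.+1 -> nth 0 mi i = minn (nth 0 mu i) (nth 0 nu i).
  by move=> i Hi'; rewrite (nth_map 0) ?size_iota // nth_iota.
have Ema : forall i, i < N.+1 -> nth 0 ma i = maxn (nth 0 mu i) (nth 0 nu i).
  by move=> i Hi'; rewrite (nth_map 0) ?size_iota // nth_iota.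
have Inv : forall n, n <= N -> S rho n.+1 + S k n = m + S ma n.+1 + S mi n.
  elim=> [|n IH] Hn.
    by rewrite /S !big_nat1 !big_geq // Ema // H0 !addn0.
  rewrite S_recr (S_recr k) (S_recr ma) (S_recr mi) Ema ?Emi; try lia.
  have := IH (ltnW Hn). have := Hi n. lia.
have := Inv N (leqnn N).
have := S_minmax mu nu N.+1.
rewrite (S_recr mi) Emi //.
have -> : nth 0 mu N = 0 by rewrite nth_default // /N; lia.
rewrite min0n addn0 -/mi -/ma.
rewrite /psize (S_sumn (l:=rho) (n:=N.+1)) ?(S_sumn (l:=k) (n:=N)) ?(S_sumn (l:=mu) (n:=N.+1))
  ?(S_sumn (l:=nu) (n:=N.+1)) /N; lia.
Qed.

Lemma dRSK_sum d k mu nu rho m : 0 < d -> dRSK_rule d k mu nu rho m ->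
  psize rho + psize k = m + psize mu + psize nu.
Proof.
move=> Hd [/and4P[Hk Hmu Hnu Hrho] _ _ H0 Hi].
set mi := map (fun i => minn (nth 0 mu i) (nth 0 nu i)) (iota 0 d).
set ma := map (fun i => maxn (nth 0 mu i) (nth 0 nu i)) (iota 0 d).
have Emi : forall i, i < d -> nth 0 mi i = minn (nth 0 mu i) (nth 0 nu i).
  by move=> i Hi'; rewrite (nth_map 0) ?size_iota // nth_iota.
have Ema : forall i, i < d -> nth 0 ma i = maxn (nth 0 mu i) (nth 0 nu i).
  by move=> i Hi'; rewrite (nth_map 0) ?size_iota // nth_iota.
have Inv : forall n, n < d -> S rho n.+1 + S k n + nth 0 ma 0 = nth 0 rho 0 + S mi n + S ma n.+1.
  elim=> [|n IH] Hn.
    by rewrite /S !big_nat1 !big_geq // !addn0.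
  rewrite S_recr (S_recr k) (S_recr ma) (S_recr mi) (Ema n.+1) // (Emi n); try lia.
  have := IH (ltnW Hn). have := Hi n.+1 ltac:(lia). simpl. lia.
have := Inv d.-1 ltac:(lia).
have := S_minmax mu nu d.
rewrite prednK // -/mi -/ma.
have := S_recr k d.-1. rewrite prednK // => Ek.
have := S_recr mi d.-1. rewrite prednK // => Emi'.
have := Emi d.-1 ltac:(lia). have := Ema 0 Hd.
rewrite /psize -(S_sumn (l:=rho) (n:=d)) -?(S_sumn (l:=k) (n:=d)) -?(S_sumn (l:=mu) (n:=d)) -?(S_sumn (l:=nu) (n:=d));
  try by case/andP: Hk; case/andP: Hmu; case/andP: Hnu; case/andP: Hrho.
lia.
Qed.

Lemma RSK_sym k mu nu rho m : RSK_rule k mu nu rho m -> RSK_rule k nu mu rho m.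
Proof.
case=> [[H1 H2] [H3 H4] H5 H6]; split => //; first by rewrite maxnC.
by move=> i; rewrite H6 minnC maxnC.
Qed.

Lemma dRSK_sym d k mu nu rho m : dRSK_rule d k mu nu rho m -> dRSK_rule d k nu mu rho m.
Proof.
case=> [/and4P[A B C D] [H1 H2 H3 H4] H5 H6 H7]; split => //.
- by rewrite A B C D.
- by rewrite minnC maxnC.
- by move=> i Hi; rewrite H7 // minnC maxnC.
Qed.

Lemma RSK_det k1 k2 mu nu rho m1 m2 : is_partition k1 -> is_partition k2 ->
  RSK_rule k1 mu nu rho m1 -> RSK_rule k2 mu nu rho m2 -> k1 = k2 /\ m1 = m2.
Proof.
move=> P1 P2 [_ _ A1 B1] [_ _ A2 B2]; split; last by lia.
apply: part_eq => // i; have := B1 i; have := B2 i; lia.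
Qed.

Lemma dRSK_det d k1 k2 mu nu rho m1 m2 : 0 < d -> is_dpartition d k1 -> is_dpartition d k2 ->
  dRSK_rule d k1 mu nu rho m1 -> dRSK_rule d k2 mu nu rho m2 -> k1 = k2 /\ m1 = m2.
Proof.
move=> Hd /andP[P1 S1] /andP[P2 S2] [_ _ C1 A1 B1] [_ _ C2 A2 B2].
have Hlast : nth 0 k1 d.-1 = nth 0 k2 d.-1 /\ m1 = m2 by lia.
split; last by case: Hlast.
apply: part_eq => // i.
case: (ltnP i d.-1) => Hi.
- have := B1 i.+1 ltac:(lia); have := B2 i.+1 ltac:(lia); simpl; lia.
- case: (ltnP d.-1 i) => Hi2.
  + by rewrite !nth_default //; lia.
  + have -> : i = d.-1 by lia. by case: Hlast.
Qed.

Definition rule_t := seq nat -> seq nat -> seq nat -> seq nat -> nat -> Prop.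

Lemma growth_uniq (rule : rule_t) (ispart : seq nat -> bool) lam P1 f1 P2 f2 :
  is_partition lam ->
  (forall k1 k2 mu nu rho m1 m2, ispart k1 -> ispart k2 ->
     rule k1 mu nu rho m1 -> rule k2 mu nu rho m2 -> k1 = k2 /\ m1 = m2) ->
  (forall x y, in_F lam x y -> ispart (P1 x y)) ->
  (forall x y, in_F lam x y -> ispart (P2 x y)) ->
  (forall i j, cell_F lam i j -> rule (P1 j.-1 i.-1) (P1 j.-1 i) (P1 j i.-1) (P1 j i) (f1 i j)) ->
  (forall i j, cell_F lam i j -> rule (P2 j.-1 i.-1) (P2 j.-1 i) (P2 j i.-1) (P2 j i) (f2 i j)) ->
  (forall x y, in_F lam x y -> ~~ in_F lam x.+1 y.+1 -> P1 x y = P2 x y) ->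
  (forall i j, cell_F lam i j -> f1 i j = f2 i j).
Proof.
move=> Hp Hdet I1 I2 R1 R2 Hbd.
have HP : forall x y, in_F lam x y -> P1 x y = P2 x y.
  suff H : forall n x y, head 0 lam - x + (size lam - y) <= n -> in_F lam x y -> P1 x y = P2 x y.
    by move=> x y; apply: H (leqnn _).
  elim=> [|n IH] x y Hm Hin; (case: (boolP (in_F lam x.+1 y.+1)) => Hb; last exact: Hbd).
  - have := inF_head Hp Hb; have := inF_size Hb; lia.
  - have Hh := inF_head Hp Hb; have Hs := inF_size Hb.
    have Hc : cell_F lam y.+1 x.+1 by rewrite cellF_inF.
    have E1 : P1 x y.+1 = P2 x y.+1.
      apply: IH; [lia | exact: inF_down Hb _ _].
    have E2 : P1 x.+1 y = P2 x.+1 y.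
      apply: IH; [lia | exact: inF_down Hb _ _].
    have E3 : P1 x.+1 y.+1 = P2 x.+1 y.+1.
      apply: IH; [lia | exact: Hb].
    have := R1 _ _ Hc; have := R2 _ _ Hc; rewrite /= => H2 H1.
    rewrite E1 E2 E3 in H1.
    by case: (Hdet _ _ _ _ _ _ _ (I1 _ _ Hin) (I2 _ _ Hin) H1 H2).
move=> i j Hc.
have Hin : in_F lam j i by move: Hc; rewrite cellF_inF => /and3P[].
have Hi : 0 < i by move: Hc; rewrite cellF_inF => /and3P[].
have Hj : 0 < j by move: Hc; rewrite cellF_inF => /and3P[].
have H1 := R1 _ _ Hc; have H2 := R2 _ _ Hc.
rewrite (HP j i) // (HP j.-1 i) ?(HP j i.-1) ?(HP j.-1 i) in H1;
  try (apply: inF_down Hin _ _ => //; lia).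
have Hin' : in_F lam j.-1 i.-1 by apply: inF_down Hin _ _ => //; lia.
by case: (Hdet _ _ _ _ _ _ _ (I1 _ _ Hin') (I2 _ _ Hin') H1 H2).
Qed.

Definition up lam k := (bpt lam k).2 < (bpt lam k.+1).2.

Lemma size_bword lam : size (bword lam) = blen lam.
Proof. by rewrite /bword size_map size_iota. Qed.

Lemma pos_plus_eq lam : pos_plus (bword lam) = filter (up lam) (iota 0 (blen lam)).
Proof.
rewrite /pos_plus size_bword; apply: eq_in_filter => k; rewrite mem_iota add0n => /andP[_ Hk].
by rewrite /bword (nth_map 0) ?size_iota // nth_iota.
Qed.

Lemma pos_minus_eq lam : pos_minus (bword lam) = filter (predC (up lam)) (iota 0 (blen lam)).
Proof.
rewrite /pos_minus size_bword; apply: eq_in_filter => k; rewrite mem_iota add0n => /andP[_ Hk].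
by rewrite /bword (nth_map 0) ?size_iota // nth_iota.
Qed.

Lemma count_up lam k : count (up lam) (iota 0 k) = (bpt lam k).2.
Proof.
elim: k => [|k IH] //.
rewrite -addn1 iotaD count_cat IH /= addn0 add0n addn1 [in RHS]bpt_S_y.
by [].
Qed.

Lemma nth_filter_iota (p : pred nat) n k : p k -> k < n ->
  nth 0 (filter p (iota 0 n)) (count p (iota 0 k)) = k.
Proof.
move=> Hp Hk.
have -> : n = k + (n - k).-1.+1 by lia.
rewrite iotaD filter_cat nth_cat size_filter ltnn subnn add0n /=.
by rewrite Hp.
Qed.

Lemma prop34_gen (rule : rule_t) (ispart : seq nat -> bool) :
  (forall k mu nu rho m, rule k mu nu rho m -> psize rho + psize k = m + psize mu + psize nu) ->
  (forall k mu nu rho m, rule k mu nu rho m -> rule k nu mu rho m) ->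
  (forall k1 k2 mu nu rho m1 m2, ispart k1 -> ispart k2 ->
     rule k1 mu nu rho m1 -> rule k2 mu nu rho m2 -> k1 = k2 /\ m1 = m2) ->
  prop34_for rule ispart.
Proof.
move=> Hsum Hsym Hdet lam w T Hp Hsz -> Hosc P f [GI G0 GR] HB.
have HT : size T = (blen lam).+1 by case: Hosc; rewrite size_bword.
have Hs : sorted geq lam by case/andP: Hp.
split; first split.
- move=> i /andP[Hi0 Hi]. set L := nth 0 lam i.-1.
  have Tele : forall j, j <= L -> psize (P j i) = \sum_(1 <= j' < j.+1) f i j' + psize (P j i.-1).
    elim=> [|j IH] Hj.
      rewrite (G0 0 i) ?(G0 0 i.-1) // ?big_geq //.
      + by rewrite /in_F leq0n andbT; lia.
      + by rewrite /in_F leq0n andbT.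
    have Hc : cell_F lam i j.+1 by rewrite /cell_F Hi0 Hi /= Hj.
    have := Hsum _ _ _ _ _ (GR _ _ Hc). rewrite /= big_nat_recr //=.
    have := IH (ltnW Hj). lia.
  have HinL : in_F lam L i by rewrite /in_F Hi leqnn.
  have HLh := inF_head Hp HinL.
  have HinL' : in_F lam L i.-1 by apply: inF_down HinL _ _ => //; lia.
  have Nb0 : ~~ in_F lam L.+1 i.-1.+1 by rewrite prednK // /in_F Hi /= -/L ltnn.
  have Nb1 : ~~ in_F lam L.+1 i.+1.
    rewrite /in_F /= negb_and -ltnNge; apply/orP; right.
    have := nth_mono Hs (leq_pred i). rewrite -/L. lia.
  have Hb0 := bpt_char Hp Hsz HinL' Nb0.
  have Hb1 := bpt_char Hp Hsz HinL Nb1.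
  rewrite /wt_plus pos_plus_eq.
  set k0 := head 0 lam - L + i.-1.
  have Ek : head 0 lam - L + i = k0.+1 by rewrite /k0; lia.
  have -> : i.-1 = count (up lam) (iota 0 k0) by rewrite count_up /k0 Hb0.
  rewrite nth_filter_iota; last by rewrite /k0 /blen; lia.
    rewrite -Ek -(boundary_val Hp Hsz HB HinL Nb1) /k0 -(boundary_val Hp Hsz HB HinL' Nb0).
    rewrite (Tele L (leqnn L)); lia.
  by rewrite /up -/k0 -Ek Hb1 Hb0 /= prednK.
- move=> j /andP[Hj0 Hj]. set c := count (fun a => j <= a) lam.
  have Hci : forall i, (i < c) = (j <= nth 0 lam i) by move=> i; apply: count_nth.
  have Hcs : c <= size lam by apply: count_size.
  have Hc0 : 0 < c by rewrite Hci; move: Hj; rewrite head_nth.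
  have Tele : forall i, i <= c -> psize (P j i) = \sum_(1 <= i' < i.+1) f i' j + psize (P j.-1 i).
    elim=> [|i IH] Hi.
      rewrite (G0 j 0) ?(G0 j.-1 0) ?orbT // ?big_geq //;
        rewrite /in_F /=; move: Hj; rewrite head_nth; lia.
    have Hc : cell_F lam i.+1 j by rewrite /cell_F /= Hj0 -Hci; lia.
    have := Hsum _ _ _ _ _ (GR _ _ Hc). rewrite /= big_nat_recr //=.
    have := IH (ltnW Hi). lia.
  have Hin : in_F lam j c by rewrite /in_F Hcs -Hci; lia.
  have Hin' : in_F lam j.-1 c by apply: inF_down Hin _ _ => //; lia.
  have Hnc : nth 0 lam c < j by rewrite ltnNge -Hci ltnn.
  have Nb0 : ~~ in_F lam j.+1 c.+1 by rewrite /in_F /= negb_and -!ltnNge; apply/orP; right; lia.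
  have Nb1 : ~~ in_F lam j.-1.+1 c.+1 by rewrite prednK // /in_F /= negb_and -!ltnNge; apply/orP; right; lia.
  have Hb0 := bpt_char Hp Hsz Hin Nb0.
  have Hb1 := bpt_char Hp Hsz Hin' Nb1.
  have Hbl : bpt lam (blen lam) = (0, size lam).
    have := @bpt_char lam 0 (size lam) Hp Hsz.
    rewrite subn0 /blen; apply; first by rewrite /in_F leqnn.
    by rewrite /in_F ltnn.
  set k1 := head 0 lam - j + c.
  have Ek : head 0 lam - j.-1 + c = k1.+1 by rewrite /k1; lia.
  have Hk1 : k1 < blen lam by rewrite /k1 /blen; lia.
  have Hsm : size (filter (predC (up lam)) (iota 0 (blen lam))) = head 0 lam.
    rewrite size_filter.
    have := count_predC (up lam) (iota 0 (blen lam)).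
    rewrite count_up Hbl size_iota /= /blen; lia.
  rewrite /wt_minus pos_minus_eq nth_rev; last by rewrite Hsm; lia.
  rewrite Hsm.
  have -> : head 0 lam - j.-1.+1 = count (predC (up lam)) (iota 0 k1).
    have := count_predC (up lam) (iota 0 k1).
    rewrite count_up Hb0 size_iota /= /k1; lia.
  rewrite nth_filter_iota //; last by rewrite /up /predC /= -bptS -Ek Hb1 Hb0 /= ltnn.
  rewrite -(boundary_val Hp Hsz HB Hin Nb0) -/k1 -Ek -(boundary_val Hp Hsz HB Hin' Nb1).
  rewrite (Tele c (leqnn c)).
  have -> : \sum_(1 <= i < (size lam).+1 | j <= nth 0 lam i.-1) f i j = \sum_(1 <= i < c.+1) f i j.
    rewrite (big_cat_nat _ (n:=c.+1)) //=.
    rewrite [X in _ + X = _]big_nat_cond [X in _ + X = _]big_pred0 ?addn0.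
      rewrite big_nat_cond [in RHS]big_nat_cond; apply: eq_bigl => i.
      case Hr: (1 <= i < c.+1); rewrite ?andbT ?andbF //=.
      by rewrite -Hci; lia.
    move=> i /=; apply/negbTE; rewrite negb_and.
    case Hr : (c.+1 <= i < (size lam).+1) => //=.
    rewrite -ltnNge.
    have Hm := nth_mono Hs (i:=c) (j:=i.-1) ltac:(lia). lia.
  lia.
- move=> P' f' [GI' G0' GR'] HB'.
  have Hpc := conj_part_ok Hp Hsz.
  have Hszc : 0 < size (conj_part lam) by rewrite conj_size head_nth part_pos.
  apply: (growth_uniq (rule:=rule) (ispart:=ispart) (lam:=conj_part lam)
      (P1 := P') (f1 := f') (P2 := fun x y => P y x) (f2 := fun i j => f j i)) => //.
  + by move=> x y; rewrite inF_conj // => H; apply: GI.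
  + by move=> i j; rewrite cellF_conj // => Hc; apply: Hsym; apply: GR Hc.
  + move=> x y Hin Hnb.
    have Hin2 : in_F lam y x by rewrite -inF_conj.
    have Hnb2 : ~~ in_F lam y.+1 x.+1 by rewrite -inF_conj.
    rewrite (boundary_val Hpc Hszc HB') // conj_head // (boundary_val Hp Hsz HB Hin2 Hnb2).
    have Hxs := inF_size Hin2. have Hyh := inF_head Hp Hin2.
    rewrite nth_rev HT; last by rewrite /blen; lia.
    congr nth; rewrite /blen; lia.
Qed.

Theorem proposition3p4 :
  (forall d : nat, 0 < d -> prop34_for (dRSK_rule d) (is_dpartition d)) /\
  prop34_for RSK_rule is_partition.
Proof.
split.
- move=> d Hd; apply: prop34_gen.
  + by move=> k mu nu rho m; apply: dRSK_sum.
  + exact: dRSK_sym.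
  + by move=> *; apply: dRSK_det; eauto.
- apply: prop34_gen.
  + exact: RSK_sum.
  + exact: RSK_sym.
  + exact: RSK_det.
Qed.
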